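(* Let $G$ be a finite simple graph, $P$ a pebble distribution, and $U$ a unit distribution of nonzero size on a vertex $u$, disjoint from $P$. If a vertex $v$ has cooperation excess at least $3$ and one of its neighbors is a cooperation vertex, then there is a vertex $w$ adjacent to $v$ with $M(w)\leq M(v)$.
   Context: A pebble distribution is a function $V(G)\to\mathbb{Z}_{\geq0}$; $(P+U)(v)=P(v)+U(v)$. A pebbling move removes two pebbles from a vertex and adds one to an adjacent vertex; a pebbling sequence is an executable sequence of moves, and $(P+U)_\sigma$ is the result of applying $\sigma$. A vertex $v$ is $k$-reachable under a distribution if some pebbling sequence yields at least $k$ pebbles on $v$; reachable means $1$-reachable. $\mathrm{reach}(P,v)$ is the largest such $k$; $\mathrm{exc}(P,v)=\mathrm{reach}(P,v)-1$ if $v$ is reachable, else $0$. A cooperation vertex is reachable under $P+U$ but under neither $P$ nor $U$. The cooperation excess of $v$ is $\mathrm{exc}(P+U,v)-\mathrm{exc}(P,v)-\mathrm{exc}(U,v)$. A vertex is utilized by a pebbling sequence if some move of it removes or adds a pebble at that vertex. $M(v)$ is the minimum, over pebbling sequences $\sigma$ from $P+U$ with $(P+U)_\sigma(v)\geq 2$, of the number of cooperation vertices utilized by $\sigma$ (counting $v$ if it is a cooperation vertex); $M(v)=\infty$ if $v$ is not $2$-reachable under $P+U$. *)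

(* Defs.v *)
From mathcomp Require Import all_boot.
From mathcomp Require Import ssralg ssrint.
From Stdlib Require Import ClassicalEpsilon ClassicalDescription.

Set Implicit Arguments.
Unset Strict Implicit.
Unset Printing Implicit Defensive.

Section Pebbling.
Variable T : finType.
Variable e : rel T.

Definition dist := T -> nat.

Definition dadd (P U : dist) : dist := fun x => P x + U x.

Definition move (D : dist) (m : T * T) : option dist :=
  let: (x, y) := m in
  if e x y && (2 <= D x) then
    Some (fun z => (if z == x then D z - 2 else D z) + (if z == y then 1 else 0))
  else None.

Fixpoint run (D : dist) (s : seq (T * T)) : option dist :=
  match s with
  | [::] => Some D
  | m :: s' => match move D m with
               | Some D' => run D' s'
               | None => None
               end
  end.

Definition kreach (D : dist) (v : T) (k : nat) : Prop :=
  exists s D', run D s = Some D' /\ k <= D' v.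

Definition reachable (D : dist) (v : T) : Prop := kreach D v 1.

Definition reach (D : dist) (v : T) : nat :=
  epsilon (inhabits 0%N)
    (fun k => kreach D v k /\ forall j, kreach D v j -> j <= k).

Definition exc (D : dist) (v : T) : nat :=
  if excluded_middle_informative (reachable D v) then (reach D v).-1 else 0.

Definition coop (P U : dist) (x : T) : Prop :=
  reachable (dadd P U) x /\ ~ reachable P x /\ ~ reachable U x.

Definition coop_excess (P U : dist) (v : T) : int :=
  ((exc (dadd P U) v)%:Z - (exc P v)%:Z - (exc U v)%:Z)%R.

Definition utilized (s : seq (T * T)) (x : T) : Prop :=
  exists2 m, m \in s & (m.1 = x \/ m.2 = x).

Definition coop_b (P U : dist) (x : T) : bool :=
  if excluded_middle_informative (coop P U x) then true else false.

Definition utilized_b (s : seq (T * T)) (x : T) : bool :=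
  has (fun m : T * T => (m.1 == x) || (m.2 == x)) s.

Definition coop_cost (P U : dist) (v : T) (s : seq (T * T)) : nat :=
  #|[set x | coop_b P U x && (utilized_b s x || (x == v))]|.

Definition two_on (P U : dist) (v : T) (s : seq (T * T)) : Prop :=
  exists D', run (dadd P U) s = Some D' /\ 2 <= D' v.

(* M(v) in nat ∪ {∞}; None stands for ∞. *)
Definition M (P U : dist) (v : T) : option nat :=
  if excluded_middle_informative (kreach (dadd P U) v 2) then
    Some (epsilon (inhabits 0%N)
      (fun m => (exists s, two_on P U v s /\ coop_cost P U v s = m) /\
                forall s, two_on P U v s -> m <= coop_cost P U v s))
  else None.

End Pebbling.

Definition leinf (a b : option nat) : bool :=
  match a, b with
  | _, None => true
  | None, Some _ => false
  | Some m, Some n => m <= n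
  end.

Definition unit_dist (T : finType) (U : T -> nat) (u : T) : Prop :=
  0 < U u /\ forall x, x != u -> U x = 0.

Definition disjoint_dist (T : finType) (P U : T -> nat) : Prop :=
  forall x, P x = 0 \/ U x = 0.

(* Main.v *)
Require Import Defs.
From mathcomp Require Import all_boot ssralg ssrnum ssrint.
From Stdlib Require Import ClassicalEpsilon ClassicalDescription Classical.

Lemma min_exists (A : Type) (f : A -> nat) (Q : A -> Prop) :
  (exists s, Q s) ->
  exists m, (exists s, Q s /\ f s = m) /\ forall s, Q s -> m <= f s.
Proof.
case=> s0 Qs0.
suff H : forall n s, Q s -> f s <= n ->
  exists m, (exists s, Q s /\ f s = m) /\ forall s, Q s -> m <= f s.
  exact: (H (f s0) s0 Qs0 (leqnn _)).
elim=> [|n IH] s Qs fs.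
  exists 0; split => //; exists s; split => //; by move: fs; case: (f s).
case: (classic (exists s', Q s' /\ f s' <= n)) => [[s' [Qs' fs']]|Hn].
  exact: (IH s' Qs' fs').
exists (f s); split; first by exists s.
move=> s' Qs'; case: (leqP (f s') n) => h.
  by exfalso; apply: Hn; exists s'.
exact: leq_trans fs h.
Qed.

Lemma split_into (T : finType) (e : rel T) (v : T) s :
  forall D D', run e D s = Some D' -> D v < D' v ->
  exists s1 w s2 D1, s = s1 ++ (w, v) :: s2 /\ run e D s1 = Some D1
     /\ e w v /\ 2 <= D1 w.
Proof.
elim: s => [|[x y] s IH] D D' /=.
  by case=> <-; rewrite ltnn.
case Hm: (move e D (x, y)) => [D1|]; last by move: Hm; rewrite /move => ->.
move: Hm; rewrite /move; case: ifP => // /andP [exy hx] [HD1] Hr Hlt; subst D1.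
case: (eqVneq y v) => [Hy|Hy].
  by subst y; exists [::], x, s, D.
case: (IH _ _ Hr) => [|s1 [w [s2 [D2 [Hs [Hr1 [ew h2]]]]]]].
  apply: leq_trans Hlt; rewrite (eq_sym v y) (negbTE Hy) addn0.
  by case: ifP => _ //; rewrite ltnS leq_subr.
exists ((x, y) :: s1), w, s2, D2; split; first by rewrite Hs.
by rewrite /= exy hx /=.
Qed.

Theorem claim3p6 (T : finType) (e : rel T)
  (e_sym : symmetric e) (e_irr : irreflexive e)
  (P U : T -> nat) (u : T)
  (hU : unit_dist U u) (hdisj : disjoint_dist P U)
  (v : T)
  (hexc : (3 <= coop_excess e P U v)%R)
  (hnb : exists x, e v x /\ coop e P U x) :
  exists w, e v w /\ leinf (M e P U w) (M e P U v).
Proof.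
case: hnb => x [evx [_ [nPx nUx]]].
have reach_nb : forall D : T -> nat, 2 <= D v -> reachable e D x.
  move=> D hD; exists [:: (v, x)].
  eexists; split; first by rewrite /= /move evx hD /=.
  by rewrite /= eqxx addn1.
have small : dadd P U v < 2.
  rewrite ltnNge; apply/negP => h; rewrite /dadd in h.
  case: (hdisj v) => h0; rewrite h0 ?addn0 /= in h.
    by apply: nUx; apply: reach_nb.
  by apply: nPx; apply: reach_nb.
rewrite {2}/M; case: excluded_middle_informative => Hk /=; last by exists x; split => //; case: (M e P U x).
set Q := fun s => two_on e P U v s.
have [s0 Hs0] : exists s, Q s.
  case: Hk => s [D' [Hr h]]; exists s; by exists D'.
have := epsilon_spec (inhabits 0%N) _
          (@min_exists _ (coop_cost e P U v) Q (ex_intro Q s0 Hs0)).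
set mv := epsilon _ _ => [[[s [Qs <-]] _]].
case: Qs => D' [Hr h2].
have [s1 [w [s2 [D1 [Hs [Hr1 [ewv h1]]]]]]] :=
  @split_into _ e v s _ _ Hr (leq_trans small h2).
exists w; split; first by rewrite e_sym.
have two1 : two_on e P U w s1 by exists D1.
rewrite /M; case: excluded_middle_informative => Hk2 /=; last first.
  by exfalso; apply: Hk2; exists s1, D1.
have := epsilon_spec (inhabits 0%N) _
          (@min_exists _ (coop_cost e P U w) _ (ex_intro _ s1 two1)).
set mw := epsilon _ _ => [[_ Hmin]].
apply: leq_trans (Hmin _ two1) _.
apply: subset_leq_card; apply/subsetP => z; rewrite !inE.
case/andP => -> /= /orP [Hu|/eqP ->]; apply/orP; left.
  by move: Hu; rewrite Hs /utilized_b has_cat => ->.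
by rewrite Hs /utilized_b has_cat /= eqxx orbT.
Qed.
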